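(* Let $\rho$ be a representation of $D^{2,2,2}$ and let $\{i,j,k\}=\{1,2,3\}$. Then: 1. $\varphi_i(\Phi^+\rho(x_i))=0$; 2. $\varphi_i(\Phi^+\rho(x_j))=\varphi_k(\Phi^+\rho(x_j))=\rho(y_iy_k)$; 3. $\varphi_i(\Phi^+\rho(y_i))=\rho(x_i(y_j+y_k))$; 4. $\varphi_i(\Phi^+\rho(y_j))=\rho(y_i(x_j+y_k))$; 5. $\varphi_i(\Phi^+\rho(I))=\rho(y_i(y_j+y_k))$; 6. $\varphi_i(\Phi^+\rho(y_jy_k))=\rho(y_i(x_j+x_k))$.
   Context: $D^{2,2,2}$ is the modular lattice generated by $x_1,y_1,x_2,y_2,x_3,y_3$ subject only to $x_i\subseteq y_i$ ($i=1,2,3$), with a greatest element $I$ adjoined. Meet is written $ab$, join $a+b$. A representation $\rho$ of $D^{2,2,2}$ in a finite-dimensional vector space $X_0$ is a lattice morphism from $D^{2,2,2}$ to the subspace lattice of $X_0$, with $\rho(I)=X_0$. Write $X_i=\rho(x_i)\subseteq Y_i=\rho(y_i)$. Put $R=Y_1\oplus Y_2\oplus Y_3$ and $X^1_0=\{(\eta_1,\eta_2,\eta_3)\in R:\sum\eta_i=0\}$. Let $G'_i\subseteq R$ be the triples whose $i$-th coordinate lies in $X_i$, and let $H'_i\subseteq R$ be the triples whose $i$-th coordinate is $0$. $\Phi^+\rho$ is the representation of $D^{2,2,2}$ in $X^1_0$ with $\Phi^+\rho(y_i)=G'_i\cap X^1_0$, $\Phi^+\rho(x_i)=H'_i\cap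 X^1_0$, $\Phi^+\rho(I)=X^1_0$. The elementary map $\varphi_i:X^1_0\to X_0$ is $(\eta_1,\eta_2,\eta_3)\mapsto\eta_i$; $\varphi_i(S)$ denotes the image of a subspace $S$. *)

(* Defs.v *)
From HB Require Import structures.
From mathcomp Require Import all_boot all_algebra.
Set Implicit Arguments. Unset Strict Implicit. Unset Printing Implicit Defensive.
Import GRing.Theory.
Local Open Scope ring_scope.

(* Triples (eta_1, eta_2, eta_3) are elements of V * V * V, a vectType
   (the canonical product vector space), i.e. V^3 = X_0 ^3.               *)
Section D222.
Variables (K : fieldType) (V : vectType K).

Notation V3 := ((V * V) * V)%type.

(* the i-th coordinate of a triple, i : 'I_3 (0,1,2 stand for 1,2,3) *)
Definition coord3 (i : 'I_3) (t : V3) : V :=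
  if val i == 0%N then t.1.1 else if val i == 1%N then t.1.2 else t.2.

Definition phi (i : 'I_3) : 'Hom(V3, V) := linfun (coord3 i).

Definition sum3 : 'Hom(V3, V) := linfun (fun t : V3 => t.1.1 + t.1.2 + t.2).

(* R = Y_1 (+) Y_2 (+) Y_3 as a subspace of V^3 *)
Definition Rsp (Y : 'I_3 -> {vspace V}) : {vspace V3} :=
  (\bigcap_(i < 3) (phi i @^-1: Y i))%VS.

Definition X01 (Y : 'I_3 -> {vspace V}) : {vspace V3} :=
  (Rsp Y :&: lker sum3)%VS.

Definition G' (X Y : 'I_3 -> {vspace V}) (i : 'I_3) : {vspace V3} :=
  (Rsp Y :&: (phi i @^-1: X i))%VS.

Definition H' (Y : 'I_3 -> {vspace V}) (i : 'I_3) : {vspace V3} :=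
  (Rsp Y :&: lker (phi i))%VS.

Definition PhiPlus_y (X Y : 'I_3 -> {vspace V}) (i : 'I_3) : {vspace V3} :=
  (G' X Y i :&: X01 Y)%VS.
Definition PhiPlus_x (Y : 'I_3 -> {vspace V}) (i : 'I_3) : {vspace V3} :=
  (H' Y i :&: X01 Y)%VS.
Definition PhiPlus_I (Y : 'I_3 -> {vspace V}) : {vspace V3} := X01 Y.

End D222.

Arguments coord3 {K V}.
Arguments phi {K V}.
Arguments sum3 {K V}.
Arguments Rsp {K V}.
Arguments X01 {K V}.
Arguments G' {K V}.
Arguments H' {K V}.
Arguments PhiPlus_y {K V}.
Arguments PhiPlus_x {K V}.
Arguments PhiPlus_I {K V}.

(* Main.v *)
Require Import Defs.
From HB Require Import structures.
From mathcomp Require Import all_boot all_algebra.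
Set Implicit Arguments. Unset Strict Implicit.
Import GRing.Theory.
Local Open Scope ring_scope.

Section H.
Variables (K : fieldType) (V : vectType K).
Notation V3 := ((V * V) * V)%type.

Definition mk (i : 'I_3) (a : V) : V3 :=
  ((if val i == 0%N then a else 0, if val i == 1%N then a else 0),
    if val i == 2%N then a else 0).

Lemma coord3D l (x y : V3) : coord3 l (x + y) = coord3 l x + coord3 l y.
Proof. by rewrite /coord3; case: ifP => //; case: ifP. Qed.

Lemma coord3_mk l i a : coord3 l (mk i a) = if l == i then a else 0.
Proof.
case: l => [[|[|[|l]]] Hl] //; case: i => [[|[|[|i]]] Hi] //.
Qed.

Lemma ord3_cases (i j k l : 'I_3) : i != j -> i != k -> j != k ->
  [\/ l = i, l = j | l = k].
Proof.
case: i => [[|[|[|i]]] Hi] //; case: j => [[|[|[|j]]] Hj] //;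
case: k => [[|[|[|k]]] Hk] //; case: l => [[|[|[|l]]] Hl] //= _ _ _;
  (try by constructor; apply: val_inj).
Qed.

Lemma p3 (a b c : V) : [/\ a+b+c = a+c+b, a+b+c = b+a+c, a+b+c = b+c+a,
   a+b+c = c+a+b & a+b+c = c+b+a].
Proof.
split; first by rewrite addrAC.
- by rewrite (addrC a b).
- by rewrite (addrC a b) addrAC.
- by rewrite addrC addrA.
- by rewrite addrC (addrC a b) addrA.
Qed.

Lemma sum_dist (i j k : 'I_3) (t : V3) : i != j -> i != k -> j != k ->
  t.1.1 + t.1.2 + t.2 = coord3 i t + coord3 j t + coord3 k t.
Proof.
have [? ? ? ? ?] := p3 t.1.1 t.1.2 t.2.
case: i => [[|[|[|i]]] Hi] //; case: j => [[|[|[|j]]] Hj] //;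
case: k => [[|[|[|k]]] Hk] //= _ _ _; rewrite /coord3 /=; done.
Qed.

Lemma coord3_lin l : linear (coord3 l : V3 -> V).
Proof. by move=> a x y; rewrite /coord3; case: ifP => //; case: ifP. Qed.

Definition sumf (t : V3) : V := t.1.1 + t.1.2 + t.2.
Lemma sumf_lin : linear sumf.
Proof.
move=> a x y; rewrite /sumf /= !scalerDr [RHS]addrACA.
by rewrite (addrACA (a *: x.1.1)).
Qed.
End H.


HB.instance Definition _ (K : fieldType) (V : vectType K) (l : 'I_3) := GRing.isLinear.Build K _ _ _ (@coord3 K V l) (@coord3_lin K V l).
HB.instance Definition _ (K : fieldType) (V : vectType K) := GRing.isLinear.Build K _ _ _ (@sumf K V) (@sumf_lin K V).

Section H2.
Variables (K : fieldType) (V : vectType K).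
Notation V3 := ((V * V) * V)%type.

Lemma phiE l (t : V3) : phi l t = coord3 l t.
Proof. by rewrite /phi lfunE. Qed.

Lemma sum3E (t : V3) : sum3 t = t.1.1 + t.1.2 + t.2.
Proof. by rewrite /sum3 (lfunE (@sumf K V)). Qed.

Lemma memRsp Y (t : V3) : (t \in Rsp Y) <-> (forall l, coord3 l t \in Y l).
Proof.
rewrite /Rsp memvE; split.
  move/subv_bigcapP => H l; rewrite -phiE memv_preim memvE; exact: H.
by move=> H; apply/subv_bigcapP => l _; rewrite -memvE -memv_preim phiE H.
Qed.


Lemma memX01 Y (t : V3) : t \in X01 Y <-> (forall l, coord3 l t \in Y l) /\ sumf t = 0.
Proof.
rewrite /X01 memv_cap memv_ker sum3E /sumf; split.
  by case/andP => /memRsp H /eqP ->.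
by case=> /memRsp -> ->; rewrite eqxx.
Qed.

Lemma memPy X Y l (t : V3) :
  t \in PhiPlus_y X Y l <-> t \in X01 Y /\ coord3 l t \in X l.
Proof.
rewrite /PhiPlus_y /G' !memv_cap -memv_preim phiE; split.
  by case/andP => /andP[_ ->] ->.
case=> H ->; rewrite H andbT /=; move: H; rewrite andbT; by case/andP.
Qed.

Lemma memPx Y l (t : V3) :
  t \in PhiPlus_x Y l <-> t \in X01 Y /\ coord3 l t = 0.
Proof.
rewrite /PhiPlus_x /H' !memv_cap memv_ker phiE; split.
  by case/andP => /andP[_ /eqP ->] ->.
case=> H ->; rewrite H eqxx andbT /=; move: H; rewrite andbT; by case/andP.
Qed.

Definition mk3 i j k (a b c : V) : V3 := mk i a + mk j b + mk k c.

Section Dist.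
Variables (i j k : 'I_3) (hij : i != j) (hik : i != k) (hjk : j != k).

Lemma mk3i a b c : coord3 i (mk3 i j k a b c) = a.
Proof. by rewrite /mk3 !coord3D !coord3_mk eqxx (negbTE hij) (negbTE hik) !addr0. Qed.
Lemma mk3j a b c : coord3 j (mk3 i j k a b c) = b.
Proof. by rewrite /mk3 !coord3D !coord3_mk eqxx eq_sym (negbTE hij) (negbTE hjk) addr0 add0r. Qed.
Lemma mk3k a b c : coord3 k (mk3 i j k a b c) = c.
Proof. by rewrite /mk3 !coord3D !coord3_mk eqxx eq_sym (negbTE hik) eq_sym (negbTE hjk) !add0r. Qed.

Lemma mk3_X01 (Y : 'I_3 -> {vspace V}) a b c : a \in Y i -> b \in Y j -> c \in Y k -> a + b + c = 0 ->
  mk3 i j k a b c \in X01 Y.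
Proof.
move=> Ha Hb Hc H0; apply/memX01; split.
  by move=> l; case: (ord3_cases l hij hik hjk) => ->; rewrite ?mk3i ?mk3j ?mk3k.
by rewrite /sumf (sum_dist _ hij hik hjk) mk3i mk3j mk3k.
Qed.

Lemma X01_sum (Y : 'I_3 -> {vspace V}) t : t \in X01 Y -> coord3 i t + coord3 j t + coord3 k t = 0.
Proof. by case/memX01 => _; rewrite /sumf (sum_dist _ hij hik hjk). Qed.

End Dist.
End H2.

Unset Implicit Arguments.

Theorem mainTheorem4 (K : fieldType) (V : vectType K)
    (X Y : 'I_3 -> {vspace V})
    (hXY : forall i, (X i <= Y i)%VS)
    (i j k : 'I_3) (hij : i != j) (hik : i != k) (hjk : j != k) :
  ((phi i @: PhiPlus_x Y i)%VS = 0%VS) /\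
  ((phi i @: PhiPlus_x Y j)%VS = (Y i :&: Y k)%VS
     /\ (phi k @: PhiPlus_x Y j)%VS = (Y i :&: Y k)%VS) /\
  ((phi i @: PhiPlus_y X Y i)%VS = (X i :&: (Y j + Y k))%VS) /\
  ((phi i @: PhiPlus_y X Y j)%VS = (Y i :&: (X j + Y k))%VS) /\
  ((phi i @: PhiPlus_I Y)%VS = (Y i :&: (Y j + Y k))%VS) /\
  ((phi i @: (PhiPlus_y X Y j :&: PhiPlus_y X Y k))%VS
     = (Y i :&: (X j + X k))%VS).
Proof.
have mk3X := mk3_X01 hij hik hjk (Y := Y).
have Xs := X01_sum hij hik hjk (Y := Y).
have M1 := mk3i hij hik.
have M2 := mk3j hij hjk.
have M3 := mk3k hik hjk.
have sX : forall l v, v \in X l -> v \in Y l.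
  by move=> l v; apply/subvP.
have Ei : forall t : (V * V) * V, t \in X01 Y ->
    coord3 i t = - (coord3 j t + coord3 k t).
  by move=> t /Xs S; apply/eqP; rewrite -addr_eq0 addrA S.
have eqw : forall w u v : V, w = u + v -> w + - u + - v = 0.
  by move=> w u v ->; rewrite -addrA -opprD subrr.
split; [|split; [split|split; [|split; [|split]]]];
  apply/vspaceP => w; apply/idP/idP.
- by case/memv_imgP => t /memPx [_ H0] ->; rewrite phiE H0 mem0v.
- rewrite memv0 => /eqP ->; apply/memv_imgP; exists 0; last by rewrite linear0.
  by apply/memPx; split; [exact: mem0v | rewrite /coord3; case: ifP => //; case: ifP].
- case/memv_imgP => t /memPx [H0 Hj] ->; rewrite phiE.
  case/memX01: (H0) => HY _.
  move: (Xs _ H0); rewrite Hj addr0 => /eqP; rewrite addr_eq0 => /eqP E.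
  by rewrite memv_cap HY /= E memvN.
- case/memv_capP => Hi Hk; apply/memv_imgP; exists (mk3 i j k w 0 (- w)).
    apply/memPx; split; last exact: M2.
    by apply: mk3X; rewrite ?mem0v ?memvN // addr0 subrr.
  by rewrite phiE M1.
- case/memv_imgP => t /memPx [H0 Hj] ->; rewrite phiE.
  case/memX01: (H0) => HY _.
  move: (Xs _ H0); rewrite Hj addr0 => /eqP; rewrite addrC addr_eq0 => /eqP E.
  by rewrite memv_cap HY andbT E memvN.
- case/memv_capP => Hi Hk; apply/memv_imgP; exists (mk3 i j k (- w) 0 w).
    apply/memPx; split; last exact: M2.
    by apply: mk3X; rewrite ?mem0v ?memvN // addr0 addNr.
  by rewrite phiE M3.
- case/memv_imgP => t /memPy [H0 Hx] ->; rewrite phiE.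
  case/memX01: (H0) => HY _.
  by rewrite memv_cap Hx /= (Ei _ H0) memvN memv_add.
- case/memv_capP => Hi /memv_addP [u Hu [v Hv Ew]].
  apply/memv_imgP; exists (mk3 i j k w (- u) (- v)).
    apply/memPy; split; last by rewrite M1.
    apply: mk3X; [exact: sX | by rewrite memvN | by rewrite memvN | exact: eqw].
  by rewrite phiE M1.
- case/memv_imgP => t /memPy [H0 Hx] ->; rewrite phiE.
  case/memX01: (H0) => HY _.
  by rewrite memv_cap HY /= (Ei _ H0) memvN memv_add.
- case/memv_capP => Hi /memv_addP [u Hu [v Hv Ew]].
  apply/memv_imgP; exists (mk3 i j k w (- u) (- v)).
    apply/memPy; split; last by rewrite M2 memvN.
    apply: mk3X; [done | by rewrite memvN sX | by rewrite memvN | exact: eqw].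
  by rewrite phiE M1.
- case/memv_imgP => t H0 ->; rewrite phiE.
  case/memX01: (H0) => HY _.
  by rewrite memv_cap HY /= (Ei _ H0) memvN memv_add.
- case/memv_capP => Hi /memv_addP [u Hu [v Hv Ew]].
  apply/memv_imgP; exists (mk3 i j k w (- u) (- v)).
    apply: mk3X; [done | by rewrite memvN | by rewrite memvN | exact: eqw].
  by rewrite phiE M1.
- case/memv_imgP => t /memv_capP [/memPy [H0 Hxj] /memPy [_ Hxk]] ->; rewrite phiE.
  case/memX01: (H0) => HY _.
  by rewrite memv_cap HY /= (Ei _ H0) memvN memv_add.
- case/memv_capP => Hi /memv_addP [u Hu [v Hv Ew]].
  have H0 : mk3 i j k w (- u) (- v) \in X01 Y.
    apply: mk3X; [done | by rewrite memvN sX | by rewrite memvN sX | exact: eqw].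
  apply/memv_imgP; exists (mk3 i j k w (- u) (- v)); last by rewrite phiE M1.
  apply/memv_capP; split; apply/memPy; split => //.
    by rewrite M2 memvN.
  by rewrite M3 memvN.
Qed.
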